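(* For all integers $k>1$, \[ c_k=1+O\Bigl(\frac1k\Bigr) \] with an absolute implied constant, where \[ c_k := \frac{2k}{2k-1}\,\frac{\zeta(2-1/k)}{\zeta(2)}\,\zeta(k)^2\prod_{p}\Bigl(1-\frac{2p}{(p+1)p^{k}}\Bigr). \]
   Context: $\zeta$ is the Riemann zeta function and the product is over all primes $p$. *)

(* Defs.v *)
From Stdlib Require Import Reals ZArith Znumtheory.
From Coquelicot Require Import Coquelicot.
Open Scope R_scope.

Definition zeta (s : R) : R :=
  Series (fun n : nat => / Rpower (INR (S n)) s).

Definition euler_factor (k : nat) (p : nat) : R :=
  1 - 2 * INR p / ((INR p + 1) * INR p ^ k).

Fixpoint prime_prod (k : nat) (N : nat) : R :=
  match N with
  | O => 1
  | S m => prime_prod k m *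
           (if prime_dec (Z.of_nat (S m)) then euler_factor k (S m) else 1)
  end.

Definition euler_prod (k : nat) : R :=
  real (Lim_seq (fun N => prime_prod k N)).

Definition c_const (k : nat) : R :=
  (2 * INR k) / (2 * INR k - 1) * (zeta (2 - / INR k) / zeta 2)
  * (zeta (INR k)) ^ 2 * euler_prod k.

(* Main.v *)
Require Import Defs.
From Stdlib Require Import Reals ZArith Znumtheory Lra Lia Psatz.
From Coquelicot Require Import Coquelicot.
Open Scope R_scope.


Definition fz (s : R) (n : nat) : R := / Rpower (INR (S n)) s.

Lemma Rpower_pos' x y : 0 < Rpower x y.
Proof. unfold Rpower; apply exp_pos. Qed.

Lemma Rpower_1_l y : Rpower 1 y = 1.
Proof. unfold Rpower; rewrite ln_1, Rmult_0_r; apply exp_0. Qed.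

Lemma INRS_ge1 n : 1 <= INR (S n).
Proof. rewrite S_INR; pose proof (pos_INR n); lra. Qed.

Lemma Rpower_32 x : 0 < x -> Rpower x (3/2) = x * sqrt x.
Proof.
  intros Hx. replace (3/2) with (1 + /2) by field.
  rewrite Rpower_plus, Rpower_1, Rpower_sqrt; auto.
Qed.

Lemma step32 (a b : R) : 0 < a -> b * b = a * a + 1 -> 0 < b ->
  / (b * b * b) <= 2 * (/ a - / b).
Proof.
  intros Ha Hb Hb0.
  assert (Hab : a < b) by nra.
  assert (H : a <= 2 * (b*b) * (b - a)) by nra.
  replace (2 * (/ a - / b)) with (2 * (b - a) / (a * b)) by (field; lra).
  apply Rmult_le_reg_r with (a * b * (b*b*b)).
  { apply Rmult_lt_0_compat; [nra|]. repeat apply Rmult_lt_0_compat; lra. }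
  field_simplify; [|lra|nra]. 
  nra.
Qed.

Lemma fz_32 n : fz (3/2) n = / (sqrt (INR (S n)) * sqrt (INR (S n)) * sqrt (INR (S n))).
Proof.
  unfold fz. pose proof (INRS_ge1 n).
  rewrite Rpower_32 by lra. rewrite sqrt_sqrt by lra. reflexivity.
Qed.

Lemma psum32 N : sum_n (fz (3/2)) N <= 3 - 2 / sqrt (INR (S N)).
Proof.
  induction N.
  - rewrite sum_O. unfold fz. simpl INR. rewrite Rpower_1_l, sqrt_1. lra.
  - rewrite sum_Sn. change (plus ?x ?y) with (x + y).
    pose proof (INRS_ge1 N).
    assert (Ha : 0 < sqrt (INR (S N))) by (apply sqrt_lt_R0; lra).
    assert (Hb : 0 < sqrt (INR (S (S N)))) by (apply sqrt_lt_R0; pose proof (INRS_ge1 (S N)); lra).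
    pose proof (step32 (sqrt (INR (S N))) (sqrt (INR (S (S N)))) Ha).
    rewrite fz_32.
    assert (E : sqrt (INR (S (S N))) * sqrt (INR (S (S N))) = sqrt (INR (S N)) * sqrt (INR (S N)) + 1).
    { rewrite !sqrt_sqrt by (pose proof (INRS_ge1 (S N)); lra). rewrite (S_INR (S N)); ring. }
    specialize (H0 E Hb).
    unfold Rdiv in *. lra.
Qed.

Lemma ex_series_32 : ex_series (fz (3/2)).
Proof.
  assert (H : ex_finite_lim_seq (sum_n (fz (3/2)))).
  { apply ex_finite_lim_seq_incr with 3.
    - intros n. rewrite sum_Sn. change (plus ?x ?y) with (x + y).
      unfold fz. pose proof (Rpower_pos' (INR (S (S n))) (3/2)).
      pose proof (Rinv_0_lt_compat _ H). lra.
    - intros n. pose proof (psum32 n).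
      assert (0 < sqrt (INR (S n))) by (apply sqrt_lt_R0; pose proof (INRS_ge1 n); lra).
      assert (0 < 2 / sqrt (INR (S n))) by (apply Rdiv_lt_0_compat; lra). lra. }
  destruct H as [l Hl]. exists l. exact Hl.
Qed.

Lemma fz_bound s n : 3/2 <= s -> 0 <= fz s n <= fz (3/2) n.
Proof.
  intros Hs. unfold fz. split.
  - left; apply Rinv_0_lt_compat, Rpower_pos'.
  - apply Rinv_le_contravar; [apply Rpower_pos'|].
    apply Rle_Rpower; [apply INRS_ge1|lra].
Qed.

Lemma ex_series_fz s : 3/2 <= s -> ex_series (fz s).
Proof.
  intros Hs. apply (ex_series_le (fz s) (fz (3/2))); [|apply ex_series_32].
  intros n. destruct (fz_bound s n Hs). change norm with Rabs. simpl.
  rewrite Rabs_pos_eq; lra.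
Qed.

Lemma zeta_fz s : zeta s = Series (fz s).
Proof. reflexivity. Qed.

Lemma Series_nonneg a : (forall n, 0 <= a n) -> ex_series a -> 0 <= Series a.
Proof.
  intros H He. replace 0 with (0 * Series a) by ring. rewrite <- Series_scal_l.
  apply Series_le; auto. intros n; specialize (H n); split; lra.
Qed.

Lemma zeta_split s : 3/2 <= s -> zeta s = 1 + Series (fun n => fz s (S n)).
Proof.
  intros Hs. rewrite zeta_fz, Series_incr_1 by (apply ex_series_fz; auto).
  unfold fz at 1. simpl INR. rewrite Rpower_1_l, Rinv_1. reflexivity.
Qed.

Lemma zeta_ge1 s : 3/2 <= s -> 1 <= zeta s.
Proof.
  intros Hs. rewrite zeta_split by auto.
  assert (0 <= Series (fun n => fz s (S n))); [|lra].
  apply Series_nonneg.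
  - intros n; apply fz_bound; auto.
  - apply (ex_series_incr_1 (fz s)). apply ex_series_fz; auto.
Qed.

Lemma zeta32_ge1 : 1 <= zeta (3/2).
Proof. apply zeta_ge1; lra. Qed.

Lemma INR_le_pow2 n : INR n <= 2 ^ n.
Proof.
  induction n; [simpl; lra|]. rewrite S_INR. change (2 ^ S n) with (2 * 2 ^ n).
  assert (1 <= 2 ^ n) by (apply pow_R1_Rle; lra). lra.
Qed.

Lemma zetak_bound k : (1 < k)%nat -> zeta (INR k) <= 1 + 4 / INR k * zeta (3/2).
Proof.
  intros Hk.
  assert (Hk2 : 2 <= INR k) by (apply (le_INR 2); lia).
  assert (Hs : 3/2 <= INR k) by lra.
  rewrite zeta_split by auto.
  assert (Hterm : forall n, 0 <= fz (INR k) (S n) <= 4 / 2 ^ k * fz (3/2) (S n)).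
  { intros n. split; [apply fz_bound; auto|].
    unfold fz. set (m := INR (S (S n))).
    assert (Hm : 2 <= m) by (unfold m; rewrite !S_INR; pose proof (pos_INR n); lra).
    rewrite Rpower_pow by lra. rewrite Rpower_32 by lra.
    destruct k as [|[|K]]; [lia|lia|].
    assert (HK : 2 ^ K <= m ^ K) by (apply pow_incr; lra).
    assert (Hsq : 1 <= sqrt m) by (rewrite <- sqrt_1; apply sqrt_le_1_alt; lra).
    assert (Hsq2 : sqrt m * sqrt m = m) by (apply sqrt_sqrt; lra).
    assert (Hsm : sqrt m <= m) by nra.
    assert (H2K : 0 < 2 ^ K) by (apply pow_lt; lra).
    replace (m ^ S (S K)) with (m * m * m ^ K) by (simpl; ring).
    replace (2 ^ S (S K)) with (4 * 2 ^ K) by (simpl; ring).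
    assert (HmK : 0 < m ^ K) by (apply pow_lt; lra).
    replace (4 / (4 * 2 ^ K) * / (m * sqrt m)) with (/ (2 ^ K * (m * sqrt m))) by (field; split; lra).
    apply Rinv_le_contravar.
    { apply Rmult_lt_0_compat; [lra|]. apply Rmult_lt_0_compat; lra. }
    assert (m * sqrt m <= m * m) by nra.
    apply Rle_trans with (m ^ K * (m * sqrt m)); [apply Rmult_le_compat_r; nra|].
    replace (m * m * m ^ K) with (m ^ K * (m * m)) by ring.
    apply Rmult_le_compat_l; lra. }
  assert (Hex : ex_series (fun n => fz (3/2) (S n))).
  { apply (ex_series_incr_1 (fz (3/2))). apply ex_series_32. }
  assert (H1 : Series (fun n => fz (INR k) (S n)) <= Series (fun n => 4 / 2 ^ k * fz (3/2) (S n))).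
  { apply Series_le; auto. apply (ex_series_scal_l (V := R_NormedModule) (4 / 2 ^ k)) in Hex. exact Hex. }
  rewrite Series_scal_l in H1.
  pose proof (zeta_split (3/2) ltac:(lra)).
  pose proof (INR_le_pow2 k).
  assert (0 <= Series (fun n => fz (3/2) (S n))).
  { apply Series_nonneg; auto. intros n; apply fz_bound; lra. }
  assert (4 / 2 ^ k <= 4 / INR k).
  { unfold Rdiv. apply Rmult_le_compat_l; [lra|]. apply Rinv_le_contravar; lra. }
  assert (0 <= 4 / 2 ^ k) by (apply Rdiv_le_0_compat; [lra| apply pow_lt; lra]).
  assert (4 / 2 ^ k * Series (fun n => fz (3/2) (S n)) <= 4 / INR k * zeta (3/2)).
  { apply Rmult_le_compat; auto; lra. }
  lra.
Qed.

Lemma bernoulli y j : 1 <= y -> 1 + INR j * (y - 1) <= y ^ j.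
Proof.
  intros Hy. induction j; [simpl; lra|].
  rewrite S_INR. change (y ^ S j) with (y * y ^ j).
  pose proof (pos_INR j).
  assert (y * (1 + INR j * (y - 1)) <= y * y ^ j) by (apply Rmult_le_compat_l; lra).
  assert (0 <= INR j * ((y - 1) * (y - 1))) by (apply Rmult_le_pos; nra).
  nra.
Qed.

Lemma fz_diff k n : (1 < k)%nat ->
  0 <= fz (2 - / INR k) n - fz 2 n <= 3 / INR k * fz (3/2) n.
Proof.
  intros Hk.
  assert (Hk2 : 2 <= INR k) by (apply (le_INR 2); lia).
  set (j := (k / 2)%nat).
  assert (Hj1 : (1 <= j)%nat) by (unfold j; apply Nat.div_le_lower_bound; lia).
  assert (Hj2 : (2 * j <= k)%nat) by (unfold j; apply Nat.mul_div_le; lia).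
  assert (Hj3 : (k <= 3 * j)%nat).
  { unfold j. pose proof (Nat.div_mod k 2 ltac:(lia)). pose proof (Nat.mod_upper_bound k 2 ltac:(lia)). lia. }
  assert (Rj1 : 1 <= INR j) by (apply (le_INR 1); lia).
  assert (Rj2 : 2 * INR j <= INR k) by (replace (2 * INR j) with (INR (2 * j)) by (rewrite mult_INR; simpl; ring); apply le_INR; lia).
  assert (Rj3 : INR k <= 3 * INR j) by (replace (3 * INR j) with (INR (3 * j)) by (rewrite mult_INR; simpl; ring); apply le_INR; lia).
  unfold fz. set (m := INR (S n)).
  assert (Hm : 1 <= m) by apply INRS_ge1.
  set (y := Rpower m (/ INR k)).
  assert (Hy : 1 <= y).
  { unfold y. rewrite <- (Rpower_O m) by lra. apply Rle_Rpower; auto.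
    left; apply Rinv_0_lt_compat; lra. }
  assert (Hm2 : Rpower m 2 = m * m).
  { replace 2 with (1+1) by ring. rewrite Rpower_plus, Rpower_1; lra. }
  assert (E1 : / Rpower m (2 - / INR k) = y / (m * m)).
  { unfold Rminus. rewrite Rpower_plus, Rpower_Ropp, Hm2. fold y.
    assert (0 < y) by lra. field; split; lra. }
  rewrite E1, Hm2, Rpower_32 by lra.
  assert (Hyj : y ^ j <= sqrt m).
  { unfold y. rewrite <- Rpower_pow by (apply Rpower_pos').
    rewrite Rpower_mult. rewrite <- Rpower_sqrt by lra.
    apply Rle_Rpower; auto.
    apply Rmult_le_reg_l with (2 * INR k); [lra|].
    field_simplify; lra. }
  pose proof (bernoulli y j Hy).
  assert (Hy1 : y - 1 <= 3 * sqrt m / INR k).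
  { apply Rmult_le_reg_l with (INR k); [lra|].
    field_simplify; [|lra].
    assert (0 <= sqrt m) by apply sqrt_pos. nra. }
  assert (Hsq : sqrt m * sqrt m = m) by (apply sqrt_sqrt; lra).
  assert (Hsq1 : 1 <= sqrt m) by (rewrite <- sqrt_1; apply sqrt_le_1_alt; lra).
  split.
  - replace (y / (m * m) - / (m * m)) with ((y - 1) / (m * m)) by (field; lra).
    apply Rdiv_le_0_compat; nra.
  - replace (y / (m * m) - / (m * m)) with ((y - 1) / (m * m)) by (field; lra).
    replace (3 / INR k * / (m * sqrt m)) with ((3 * sqrt m / INR k) / (m * m)).
    + unfold Rdiv at 1 3. apply Rmult_le_compat_r; [left; apply Rinv_0_lt_compat; nra|lra].
    + rewrite <- Hsq at 2. field; split; lra.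
Qed.

Lemma zeta_2k k : (1 < k)%nat ->
  zeta 2 <= zeta (2 - / INR k) <= zeta 2 + 3 / INR k * zeta (3/2).
Proof.
  intros Hk.
  assert (Hk2 : 2 <= INR k) by (apply (le_INR 2); lia).
  assert (Hs : 3/2 <= 2 - / INR k).
  { assert (/ INR k <= / 2) by (apply Rinv_le_contravar; lra). lra. }
  pose proof (ex_series_fz _ Hs) as E1.
  assert (E2 : ex_series (fz 2)) by (apply ex_series_fz; lra).
  split.
  - rewrite !zeta_fz. apply Series_le; auto. intros n.
    destruct (fz_diff k n Hk). destruct (fz_bound 2 n ltac:(lra)). lra.
  - assert (zeta (2 - / INR k) - zeta 2 <= 3 / INR k * zeta (3/2)); [|lra].
    rewrite !zeta_fz, <- Series_minus by auto.
    rewrite <- Series_scal_l. apply Series_le.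
    + intros n. apply fz_diff; auto.
    + apply (ex_series_scal_l (V := R_NormedModule)). apply ex_series_32.
Qed.

Lemma factor_bound n K : 2 <= n ->
  0 <= 2 * n / ((n + 1) * n ^ (K + 2)) <= (8 / 2 ^ (K + 2)) * (/ n - / (n + 1)).
Proof.
  intros Hn.
  assert (HK : 2 ^ K <= n ^ K) by (apply pow_incr; lra).
  assert (H2K : 0 < 2 ^ K) by (apply pow_lt; lra).
  rewrite !pow_add. simpl (2 ^ 2). simpl (n ^ 2).
  split.
  - apply Rdiv_le_0_compat; [lra|]. apply Rmult_lt_0_compat; [lra|].
    apply Rmult_lt_0_compat; [lra|]. nra.
  - replace (8 / (2 ^ K * (2 * (2 * 1))) * (/ n - / (n + 1))) with
      (2 / (2 ^ K * (n * (n + 1)))) by (field; lra).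
    assert (0 < n ^ K) by lra.
    apply Rmult_le_reg_r with ((n + 1) * (n ^ K * (n * (n * 1))) * (2 ^ K * (n * (n + 1)))).
    { repeat apply Rmult_lt_0_compat; lra. }
    field_simplify; try lra; try nra.
    assert (n * n * n * 2 ^ K <= n * n * n * n ^ K).
    { apply Rmult_le_compat_l; [nra|lra]. }
    nra.
Qed.

Lemma prime_prod_bound k N : (1 < k)%nat ->
  0 <= prime_prod k N <= 1 /\
  1 - 8 / 2 ^ k + (8 / 2 ^ k) / INR (S N) <= prime_prod k N.
Proof.
  intros Hk. destruct k as [|[|K]]; [lia|lia|].
  replace (S (S K)) with (K + 2)%nat by lia.
  assert (HD : 0 < 8 / 2 ^ (K + 2)) by (apply Rdiv_lt_0_compat; [lra|apply pow_lt; lra]).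
  set (D := 8 / 2 ^ (K + 2)) in *.
  induction N.
  - simpl. split; [lra|]. field_simplify; lra.
  - destruct IHN as [[H0 H1] H2]. change (prime_prod (K+2) (S N)) with (prime_prod (K+2) N * (if prime_dec (Z.of_nat (S N)) then euler_factor (K+2) (S N) else 1)).
    assert (Hn1 : 1 <= INR (S N)) by apply INRS_ge1.
    assert (HdD : D / INR (S (S N)) <= D / INR (S N)).
    { unfold Rdiv. apply Rmult_le_compat_l; [lra|]. apply Rinv_le_contravar; [lra|].
      rewrite (S_INR (S N)); lra. }
    destruct (prime_dec (Z.of_nat (S N))) as [Hp|Hp].
    + apply prime_ge_2 in Hp.
      assert (Hn : 2 <= INR (S N)) by (apply (le_INR 2); lia).
      unfold euler_factor.
      destruct (factor_bound (INR (S N)) K Hn) as [Hx1 Hx2]. fold D in Hx2.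
      set (x := 2 * INR (S N) / ((INR (S N) + 1) * INR (S N) ^ (K + 2))) in *.
      assert (HDx : D * (/ INR (S N) - / (INR (S N) + 1)) <= 1).
      { unfold D. rewrite pow_add. simpl (2 ^ 2).
        assert (1 <= 2 ^ K) by (apply pow_R1_Rle; lra).
        assert (/ INR (S N) <= / 2) by (apply Rinv_le_contravar; lra).
        assert (0 <= / (INR (S N) + 1)) by (left; apply Rinv_0_lt_compat; lra).
        apply Rle_trans with (8 / (2 ^ K * (2 * (2 * 1))) * / 2).
        - apply Rmult_le_compat_l; [apply Rdiv_le_0_compat; nra|lra].
        - unfold Rdiv. rewrite Rinv_mult.
          assert (/ 2 ^ K <= 1) by (rewrite <- Rinv_1; apply Rinv_le_contravar; lra).
          assert (0 < / 2 ^ K) by (apply Rinv_0_lt_compat; lra).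
          nra. }
      split; [split|].
      * apply Rmult_le_pos; lra.
      * rewrite <- (Rmult_1_r 1). apply Rmult_le_compat; lra.
      * assert (prime_prod (K+2) N * (1 - x) >= prime_prod (K+2) N - x) by nra.
        rewrite (S_INR (S N)) in *.
        assert (D / (INR (S N) + 1) = D / INR (S N) - D * (/ INR (S N) - / (INR (S N) + 1))) by (field; lra).
        lra.
    + rewrite Rmult_1_r. split; [split|]; lra.
Qed.

Lemma euler_bound k : (1 < k)%nat ->
  0 <= euler_prod k <= 1 /\ 1 - 8 / INR k <= euler_prod k.
Proof.
  intros Hk.
  assert (Hk2 : 2 <= INR k) by (apply (le_INR 2); lia).
  assert (HD : 8 / 2 ^ k <= 8 / INR k).
  { unfold Rdiv. apply Rmult_le_compat_l; [lra|]. apply Rinv_le_contravar; [lra|apply INR_le_pow2]. }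
  assert (HD0 : 0 < 8 / 2 ^ k) by (apply Rdiv_lt_0_compat; [lra|apply pow_lt; lra]).
  assert (L1 : Rbar_le (Lim_seq (fun _ => 0)) (Lim_seq (prime_prod k))).
  { apply Lim_seq_le_loc. exists O. intros n _. apply (prime_prod_bound k n Hk). }
  assert (L2 : Rbar_le (Lim_seq (prime_prod k)) (Lim_seq (fun _ => 1))).
  { apply Lim_seq_le_loc. exists O. intros n _. apply (prime_prod_bound k n Hk). }
  assert (L3 : Rbar_le (Lim_seq (fun _ => 1 - 8 / 2 ^ k)) (Lim_seq (prime_prod k))).
  { apply Lim_seq_le_loc. exists O. intros n _. destruct (prime_prod_bound k n Hk) as [_ H].
    assert (0 <= 8 / 2 ^ k / INR (S n)) by (apply Rdiv_le_0_compat; [lra|pose proof (INRS_ge1 n); lra]).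
    lra. }
  rewrite !Lim_seq_const in L1, L2, L3.
  unfold euler_prod.
  destruct (Lim_seq (prime_prod k)) as [r| |]; simpl in *; try contradiction.
  split; [split|]; lra.
Qed.

Lemma mul_bound A B x P Q : 0 <= x <= 1 -> 0 <= P -> 0 <= Q ->
  1 <= A <= 1 + x * P -> 1 <= B <= 1 + x * Q -> 1 <= A * B <= 1 + x * (P + Q + P * Q).
Proof.
  intros Hx HP HQ HA HB. split; [nra|].
  assert (A * B <= (1 + x * P) * (1 + x * Q)) by (apply Rmult_le_compat; lra).
  assert (x * x * (P * Q) <= x * (P * Q)).
  { apply Rmult_le_compat_r; [nra|nra]. }
  nra.
Qed.

Theorem theorem3p1 :
  exists C : R, forall k : nat, (1 < k)%nat ->
    Rabs (c_const k - 1) <= C / INR k.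
Proof.
  set (Z := zeta (3/2)).
  assert (HZ : 1 <= Z) by apply zeta32_ge1.
  set (P1 := 1 + 3 * Z + 1 * (3 * Z)).
  set (Q2 := 4 * Z + 4 * Z + 4 * Z * (4 * Z)).
  set (P2 := P1 + Q2 + P1 * Q2).
  exists (P2 + 8). intros k Hk.
  assert (Hk2 : 2 <= INR k) by (apply (le_INR 2); lia).
  set (x := / INR k).
  assert (Hx : 0 <= x <= 1).
  { unfold x. split; [left; apply Rinv_0_lt_compat; lra|].
    apply Rle_trans with (/ 1); [apply Rinv_le_contravar; lra|rewrite Rinv_1; lra]. }
  assert (Ha : 1 <= 2 * INR k / (2 * INR k - 1) <= 1 + x * 1).
  { assert (E : 2 * INR k / (2 * INR k - 1) = 1 + / (2 * INR k - 1)) by (field; lra).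
    assert (I1 : 0 < / (2 * INR k - 1)) by (apply Rinv_0_lt_compat; lra).
    assert (I2 : / (2 * INR k - 1) <= x) by (unfold x; apply Rinv_le_contravar; lra).
    rewrite E. split; lra. }
  destruct (zeta_2k k Hk) as [Hb1 Hb2].
  assert (Hz2 : 1 <= zeta 2) by (apply zeta_ge1; lra).
  assert (Hb : 1 <= zeta (2 - / INR k) / zeta 2 <= 1 + x * (3 * Z)).
  { assert (E : zeta (2 - / INR k) / zeta 2 = 1 + (zeta (2 - / INR k) - zeta 2) * / zeta 2) by (field; lra).
    assert (I1 : 0 < / zeta 2) by (apply Rinv_0_lt_compat; lra).
    assert (I2 : / zeta 2 <= 1) by (apply Rle_trans with (/ 1); [apply Rinv_le_contravar; lra|rewrite Rinv_1; lra]).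
    fold Z in Hb2. unfold Rdiv in Hb2. unfold x.
    assert (I3 : 0 <= (zeta (2 - / INR k) - zeta 2) * (1 - / zeta 2)) by (apply Rmult_le_pos; lra).
    assert (I4 : 0 <= (zeta (2 - / INR k) - zeta 2) * / zeta 2) by (apply Rmult_le_pos; lra).
    rewrite E. split; nra. }
  assert (Hz : 1 <= zeta (INR k) <= 1 + x * (4 * Z)).
  { split; [apply zeta_ge1; lra|]. pose proof (zetak_bound k Hk). fold Z in H.
    unfold x; unfold Rdiv in H. replace (/ INR k * (4 * Z)) with (4 * / INR k * Z) by ring; lra. }
  destruct (euler_bound k Hk) as [[He0 He1] He2].
  pose proof (mul_bound _ _ _ 1 (3 * Z) Hx ltac:(lra) ltac:(lra) Ha Hb) as Hab.
  pose proof (mul_bound _ _ _ (4 * Z) (4 * Z) Hx ltac:(lra) ltac:(lra) Hz Hz) as Hzz.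
  fold Q2 in Hzz. fold P1 in Hab.
  assert (HP1 : 0 <= P1) by (unfold P1; lra).
  assert (HQ2 : 0 <= Q2) by (unfold Q2; nra).
  pose proof (mul_bound _ _ _ _ _ Hx HP1 HQ2 Hab Hzz) as Habz. fold P2 in Habz.
  unfold c_const.
  replace (zeta (INR k) ^ 2) with (zeta (INR k) * zeta (INR k)) by ring.
  set (M := 2 * INR k / (2 * INR k - 1) * (zeta (2 - / INR k) / zeta 2) * (zeta (INR k) * zeta (INR k))) in *.
  assert (HP2 : 0 <= P2) by (unfold P2; nra).
  assert (U : M * euler_prod k <= M) by nra.
  assert (Lo : euler_prod k <= M * euler_prod k) by nra.
  replace ((P2 + 8) / INR k) with (x * (P2 + 8)) by (unfold x; field; lra).
  assert (8 / INR k = 8 * x) by (unfold x; field; lra).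
  assert (0 <= x * P2) by (apply Rmult_le_pos; lra).
  apply Rabs_le. split; lra.
Qed.
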